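(* Let $(S,M)$ be a surface with marked points and empty boundary, and let $(S,M')$ be obtained by adding one more puncture, $M'=M\cup\{p\}$. (a) If $(S,M)$ has an ideal triangulation satisfying (T3), then so does $(S,M')$. (b) If $(S,M)$ has an ideal triangulation satisfying (T3$\tfrac12$), then so does $(S,M')$. (c) If $(S,M)$ has an ideal triangulation satisfying (T4), then so does $(S,M')$.
   Context: $(S,M)$: $S$ compact, connected, oriented surface without boundary, $M$ a finite non-empty set of punctures. Arcs incident to a puncture are counted with multiplicity (an arc with both endpoints at the puncture counts twice). (T3): at each puncture at least three arcs of $T$ are incident. (T3$\tfrac12$): $T$ has (T3) and every arc of $T$ has an endpoint with at least four incident arcs. (T4): at each puncture at least four arcs of $T$ are incident. *)

(* Defs.v *)
From mathcomp Require Import all_boot.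
Set Implicit Arguments. Unset Strict Implicit. Unset Printing Implicit Defensive.

(* An ideal triangulation is a finite set of [nt] oriented ideal triangles;
   side (t,k) of triangle t runs from its corner k to its corner k+1 (mod 3).
   [glue] is a fixed-point-free involution on sides, gluing side s to side
   [glue s] with orientation reversed.  Self-folded triangles occur when a
   side is glued to another side of the same triangle. *)
Record triangulation := Triangulation {
  nt : nat;
  glue : 'I_nt * 'I_3 -> 'I_nt * 'I_3;
  glue_invol : involutive glue;
  glue_nofix : forall s, glue s != s }.

Section Tri.
Variable T : triangulation.
Definition side := ('I_(nt T) * 'I_3)%type.

Definition nextc (s : side) : side := (s.1, ordS s.2).

(* Corner (t,k) is identified with side (t,k) (the side starting at it).
   [rot] sends a corner to the next corner around the same puncture:
   corner k of t is glued to corner k'+1 of t' where (t',k') = glue (t,k). *)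
Definition rot (c : side) : side := nextc (@glue T c).

(* punctures = cycles of rot; arcs = pairs {s, glue s} *)
Definition nverts := fcard rot predT.
Definition nedges := fcard (@glue T) predT.

(* number of arc-ends (with multiplicity) at the puncture of corner c *)
Definition deg (c : side) := order rot c.

Definition tri_connected :=
  forall x y : side, connect (fun a b => (b == @glue T a) || (b == nextc a)) x y.

(* the glued surface has genus g: V - E + F = 2 - 2g *)
Definition tri_genus (g : nat) := nverts + nt T + 2 * g = nedges + 2.

(* the endpoints of the arc containing side s are the punctures at corners
   s and nextc s *)
Definition T3 := forall c : side, 3 <= deg c.
Definition T3half := T3 /\ forall s : side, 4 <= deg s \/ 4 <= deg (nextc s).
Definition T4 := forall c : side, 4 <= deg c.
End Tri.

(* (S,M), S closed connected oriented of genus g with |M| = n punctures,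
   admits an ideal triangulation satisfying P *)
Definition has_triangulation (g n : nat) (P : triangulation -> Prop) :=
  exists T : triangulation,
    [/\ tri_connected T, tri_genus T g, nverts T = n & P T].

(* Main.v *)
Require Import Defs.
From mathcomp Require Import all_boot zify.
Set Implicit Arguments. Unset Strict Implicit. Unset Printing Implicit Defensive.



Definition o0 : 'I_3 := ord0.
Definition o1 : 'I_3 := Ordinal (isT : 1 < 3).
Definition o2 : 'I_3 := Ordinal (isT : 2 < 3).

Lemma ordS3 (k : 'I_3) : ordS (ordS (ordS k)) = k.
Proof. by apply/val_inj; case: k => [[|[|[|]]] Hk]. Qed.

Lemma ord3_cases (k : 'I_3) : [\/ k = o0, k = o1 | k = o2].
Proof. by case: k => [[|[|[|]]] Hk] //; [constructor 1|constructor 2|constructor 3]; apply/val_inj. Qed.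

Section G.
Variable T : triangulation.
Implicit Types s c : side T.

Lemma nextc3 s : nextc (nextc (nextc s)) = s.
Proof. by case: s => t k; rewrite /nextc /= ordS3. Qed.

Lemma nextc_inj : injective (@nextc T).
Proof.
move=> [t k] [t' k'] E; have E1 := f_equal fst E; have E2 := f_equal snd E.
have E3 : k = k' := ordS_inj E2. by rewrite E3 -[t]/((nextc (t,k)).1) E1.
Qed.

Lemma nextc_neq s : nextc s != s.
Proof. case: s => t k; rewrite /nextc xpair_eqE eqxx /=.
by case: (ord3_cases k) => ->. Qed.

Lemma glue_inj : injective (@glue T).
Proof. exact: inv_inj (@glue_invol T). Qed.

Lemma trot_inj : injective (@Defs.rot T).
Proof. by move=> x y /nextc_inj /glue_inj. Qed.

Lemma order_fix (f : side T -> side T) c : f c = c -> order f c = 1.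
Proof.
move=> fc; rewrite (@order_cycle _ f [:: c]) //= ?inE ?fc ?eqxx //.
Qed.

Lemma nsame : T3 T -> forall s, (glue s).1 != s.1.
Proof.
move=> H3 [t i]; apply/negP => /eqP E.
case Eg: (glue (t, i)) E => [t' j] /= Et; subst t'.
have Hij : j != i.
  by apply/negP => /eqP Eji; subst j; move: (glue_nofix (t, i)); rewrite Eg eqxx.
suff [c Hc] : exists c, Defs.rot c = c.
  by move: (H3 c); rewrite /deg (order_fix Hc).
have [Ej|Ei] : j = ordS i \/ i = ordS j.
  move: Hij; case: (ord3_cases i) => ->; case: (ord3_cases j) => -> //= _.
  all: first [by left; apply/val_inj | by right; apply/val_inj | idtac].
  by exists (t, j); rewrite /Defs.rot -{1}Eg glue_invol /nextc /= Ej.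
by exists (t, i); rewrite /Defs.rot Eg /nextc /=; by rewrite Ei.
Qed.
End G.


Lemma nedges2 (U : triangulation) : nedges U * 2 = nt U * 3.
Proof.
have H := @fcard_order_set _ (@glue U) (@glue_inj U) 2 predT.
rewrite /nedges H.
- by rewrite card_prod !card_ord.
- apply/subsetP => x _; rewrite inE.
  rewrite (@order_cycle _ _ [:: x; glue x]) //=.
  + by rewrite glue_invol !eqxx.
  + by rewrite inE andbT eq_sym glue_nofix.
  + by rewrite inE eqxx.
- by [].
Qed.


Section Constr.
Variable T : triangulation.
Variable t0 : 'I_(nt T).
Hypothesis HT3 : T3 T.

Local Notation sideT := (side T).
Definition a0 : sideT := (t0, o0).
Definition b0 : sideT := nextc a0.
Definition a1 : sideT := glue a0.
Definition b1 : sideT := nextc a1.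

Definition kind := (sideT + ('I_3 + 'I_3))%type.

Definition mK (s : sideT) : kind :=
  if s == b0 then inr (inl o1) else if s == b1 then inr (inr o1) else inl s.

Definition gK (y : kind) : kind :=
  match y with
  | inl s => if s == a0 then inr (inr o0) else if s == a1 then inr (inl o0)
             else if s == b0 then inr (inl o2) else if s == b1 then inr (inr o2)
             else mK (glue s)
  | inr (inl k) => match val k with 0 => inl a1 | 1 => mK (glue b0) | _ => inl b0 end
  | inr (inr k) => match val k with 0 => inl a0 | 1 => mK (glue b1) | _ => inl b1 end
  end.

Definition nK (y : kind) : kind :=
  match y with
  | inl s => inl (nextc s)
  | inr (inl k) => inr (inl (ordS k))
  | inr (inr k) => inr (inr (ordS k))
  end.

Definition rK y := nK (gK y).

Definition hK (y : kind) : sideT :=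
  match y with
  | inl s => s
  | inr (inl k) => iter k (@nextc T) a0
  | inr (inr k) => iter k (@nextc T) a1
  end.

Definition pl : seq kind := [:: inl b0; inr (inl o0); inl b1; inr (inr o0)].

Lemma t01 : a1.1 != t0.
Proof. exact: (nsame HT3 a0). Qed.

Lemma a0b0 : a0 != b0. Proof. by rewrite eq_sym nextc_neq. Qed.
Lemma a1b1 : a1 != b1. Proof. by rewrite eq_sym nextc_neq. Qed.
Lemma diff_tri (s s' : sideT) : s.1 = t0 -> s'.1 = a1.1 -> s != s'.
Proof. by move=> E E'; apply/eqP => Es; move: t01; rewrite -E' -Es E eqxx. Qed.
Lemma a0a1 : a0 != a1. Proof. exact: diff_tri. Qed.
Lemma a0b1 : a0 != b1. Proof. exact: diff_tri. Qed.
Lemma b0a1 : b0 != a1. Proof. exact: diff_tri. Qed.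
Lemma b0b1 : b0 != b1. Proof. exact: diff_tri. Qed.
Lemma nb0 s : (nextc s == b0) = (s == a0).
Proof. by apply/eqP/eqP => [/nextc_inj|->]. Qed.
Lemma nb1 s : (nextc s == b1) = (s == a1).
Proof. by apply/eqP/eqP => [/nextc_inj|->]. Qed.
Lemma ga0 s : (glue s == a0) = (s == a1).
Proof. apply/eqP/eqP => [E|->]; last exact: glue_invol. by rewrite /a1 -E glue_invol. Qed.
Lemma ga1 s : (glue s == a1) = (s == a0).
Proof. by apply/eqP/eqP => [/glue_inj|->]. Qed.
Lemma ga1' : glue a1 = a0. Proof. exact: glue_invol. Qed.


Lemma gb0a0 : glue b0 != a0. Proof. by rewrite ga0 b0a1. Qed.
Lemma gb0a1 : glue b0 != a1. Proof. by rewrite ga1 eq_sym a0b0. Qed.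
Lemma gb1a0 : glue b1 != a0. Proof. by rewrite ga0 eq_sym a1b1. Qed.
Lemma gb1a1 : glue b1 != a1. Proof. by rewrite ga1 eq_sym a0b1. Qed.

Lemma hK_mK s : hK (mK s) = s.
Proof. by rewrite /mK; case: eqP => [->|_] //; case: eqP => [->|_]. Qed.

Lemma mK_gen s : s != b0 -> s != b1 -> mK s = inl s.
Proof. by rewrite /mK => /negbTE -> /negbTE ->. Qed.

Lemma gK_gen s : s != a0 -> s != a1 -> s != b0 -> s != b1 -> gK (inl s) = mK (glue s).
Proof. by rewrite /gK => /negbTE -> /negbTE -> /negbTE -> /negbTE ->. Qed.

Lemma gK_a0 : gK (inl a0) = inr (inr o0). Proof. by rewrite /gK eqxx. Qed.
Lemma gK_a1 : gK (inl a1) = inr (inl o0).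
Proof. by rewrite /gK eq_sym (negbTE a0a1) eqxx. Qed.
Lemma gK_b0 : gK (inl b0) = inr (inl o2).
Proof. by rewrite /gK eq_sym (negbTE a0b0) (negbTE b0a1) eqxx. Qed.
Lemma gK_b1 : gK (inl b1) = inr (inr o2).
Proof. by rewrite /gK eq_sym (negbTE a0b1) eq_sym (negbTE a1b1) eq_sym (negbTE b0b1) eqxx. Qed.

Lemma gK_N00 : gK (inr (inl o0)) = inl a1. Proof. by []. Qed.
Lemma gK_N01 : gK (inr (inl o1)) = mK (glue b0). Proof. by []. Qed.
Lemma gK_N02 : gK (inr (inl o2)) = inl b0. Proof. by []. Qed.
Lemma gK_N10 : gK (inr (inr o0)) = inl a0. Proof. by []. Qed.
Lemma gK_N11 : gK (inr (inr o1)) = mK (glue b1). Proof. by []. Qed.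
Lemma gK_N12 : gK (inr (inr o2)) = inl b1. Proof. by []. Qed.

Lemma gK_mK r : r != a0 -> r != a1 -> gK (mK r) = mK (glue r).
Proof.
move=> r0 r1; rewrite /mK; case: eqP => [->|/eqP rb0] //.
case: eqP => [->|/eqP rb1] //.
by rewrite -/(mK (glue r)) gK_gen.
Qed.

Lemma gK_invol : involutive gK.
Proof.
case=> [s|[k|k]].
- have [->|s0] := eqVneq s a0; first by rewrite gK_a0.
  have [->|s1] := eqVneq s a1; first by rewrite gK_a1.
  have [->|sb0] := eqVneq s b0; first by rewrite gK_b0.
  have [->|sb1] := eqVneq s b1; first by rewrite gK_b1.
  rewrite gK_gen // gK_mK ?ga0 ?ga1 // glue_invol mK_gen //.
- case: (ord3_cases k) => ->; first by rewrite gK_N00 gK_a1.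
    by rewrite gK_N01 gK_mK ?gb0a0 ?gb0a1 // glue_invol /mK eqxx.
  by rewrite gK_N02 gK_b0.
- case: (ord3_cases k) => ->; first by rewrite gK_N10 gK_a0.
    by rewrite gK_N11 gK_mK ?gb1a0 ?gb1a1 // glue_invol /mK eq_sym (negbTE b0b1) eqxx.
  by rewrite gK_N12 gK_b1.
Qed.

Lemma gK_nofix y : gK y != y.
Proof.
case: y => [s|[k|k]].
- have [->|s0] := eqVneq s a0; first by rewrite gK_a0.
  have [->|s1] := eqVneq s a1; first by rewrite gK_a1.
  have [->|sb0] := eqVneq s b0; first by rewrite gK_b0.
  have [->|sb1] := eqVneq s b1; first by rewrite gK_b1.
  rewrite gK_gen //; apply/eqP => /(f_equal hK); rewrite hK_mK /=.
  by apply/eqP; exact: glue_nofix.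
- case: (ord3_cases k) => ->; rewrite ?gK_N00 ?gK_N01 ?gK_N02 //.
  by apply/eqP => /(f_equal hK); rewrite hK_mK /=; apply/eqP; exact: glue_nofix.
- case: (ord3_cases k) => ->; rewrite ?gK_N10 ?gK_N11 ?gK_N12 //.
  by apply/eqP => /(f_equal hK); rewrite hK_mK /=; apply/eqP; exact: glue_nofix.
Qed.

Lemma nK3 y : nK (nK (nK y)) = y.
Proof. by case: y => [s|[k|k]] /=; rewrite ?nextc3 ?ordS3. Qed.

Lemma hK_nK y : hK (nK y) = nextc (hK y).
Proof.
case: y => [s|[k|k]] //=; case: (ord3_cases k) => -> //=; by rewrite nextc3.
Qed.


Lemma ordS0 : ordS o0 = o1. Proof. exact/val_inj. Qed.
Lemma ordS1 : ordS o1 = o2. Proof. exact/val_inj. Qed.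
Lemma ordS2 : ordS o2 = o0. Proof. exact/val_inj. Qed.

Lemma nK_N0 k : nK (inr (inl k)) = inr (inl (ordS k)). Proof. by []. Qed.
Lemma nK_N1 k : nK (inr (inr k)) = inr (inr (ordS k)). Proof. by []. Qed.
Lemma nK_O s : nK (inl s) = inl (nextc s). Proof. by []. Qed.

Lemma rK_p1 : rK (inl b0) = inr (inl o0). Proof. by rewrite /rK gK_b0 nK_N0 ordS2. Qed.
Lemma rK_p2 : rK (inr (inl o0)) = inl b1. Proof. by []. Qed.
Lemma rK_p3 : rK (inl b1) = inr (inr o0). Proof. by rewrite /rK gK_b1 nK_N1 ordS2. Qed.
Lemma rK_p4 : rK (inr (inr o0)) = inl b0. Proof. by []. Qed.

Lemma inl_pl s : (inl s \in pl) = (s == b0) || (s == b1).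
Proof. by rewrite !inE /= orbF. Qed.

Lemma mK_notp s : mK s \notin pl.
Proof.
rewrite /mK; case: eqP => // Hb0; case: eqP => // Hb1.
by rewrite inl_pl; apply/norP; split; apply/eqP.
Qed.

Lemma hK_nK_mK r : hK (nK (mK r)) = nextc r.
Proof. by rewrite hK_nK hK_mK. Qed.

Lemma rot_a0 : Defs.rot a0 = b1. Proof. by []. Qed.
Lemma rot_a1 : Defs.rot a1 = b0. Proof. by rewrite /Defs.rot ga1'. Qed.

Lemma rK_hK y : y \notin pl -> hK (rK y) = hK y \/ hK (rK y) = Defs.rot (hK y).
Proof.
case: y => [s|[k|k]].
- rewrite inl_pl negb_or => /andP [sb0 sb1].
  have [->|s0] := eqVneq s a0; first by right; rewrite /rK gK_a0.
  have [->|s1] := eqVneq s a1; first by right; rewrite /rK gK_a1 rot_a1.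
  by right; rewrite /rK gK_gen // hK_nK_mK.
- case: (ord3_cases k) => -> Hp; first by move: Hp; rewrite !inE eqxx !orbT.
  + by right; rewrite /rK gK_N01 hK_nK_mK.
  + by left; rewrite /rK gK_N02.
- case: (ord3_cases k) => -> Hp; first by move: Hp; rewrite !inE eqxx !orbT.
  + by right; rewrite /rK gK_N11 hK_nK_mK.
  + by left; rewrite /rK gK_N12.
Qed.

Lemma unitK y : y \notin pl -> mK (hK y) = y \/ rK y = mK (hK y).
Proof.
case: y => [s|[k|k]].
- by rewrite inl_pl negb_or => /andP [sb0 sb1]; left; rewrite /= mK_gen.
- case: (ord3_cases k) => -> Hp; first by move: Hp; rewrite !inE eqxx !orbT.
  + by left; rewrite /mK eqxx.
  + right; rewrite /rK gK_N02 /= mK_gen //.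
    * by rewrite nb0 eq_sym a0b0.
    * by apply: diff_tri.
- case: (ord3_cases k) => -> Hp; first by move: Hp; rewrite !inE eqxx !orbT.
  + by left; rewrite /mK eq_sym (negbTE b0b1) eqxx.
  + right; rewrite /rK gK_N12 /= mK_gen //.
    * by rewrite eq_sym; apply: diff_tri.
    * by rewrite nb1 eq_sym a1b1.
Qed.

Lemma step_mK r : r != a0 -> r != a1 ->
  nK (mK r) = mK (nextc r) \/ rK (nK (mK r)) = mK (nextc r).
Proof.
move=> r0 r1; rewrite [mK (nextc r)]mK_gen ?nb0 ?nb1 //.
rewrite /mK; case: eqP => [->|_]; first by right; rewrite /rK nK_N0 ordS1 gK_N02.
case: eqP => [->|_]; first by right; rewrite /rK nK_N1 ordS1 gK_N12.
by left.
Qed.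

Lemma rK_mK s : rK (mK s) = mK (Defs.rot s) \/ rK (rK (mK s)) = mK (Defs.rot s).
Proof.
have [->|s0] := eqVneq s a0.
  have E : mK a0 = inl a0 by apply: mK_gen; [exact: a0b0 | exact: a0b1].
  by left; rewrite E /rK gK_a0 nK_N1 ordS0 rot_a0 /mK eq_sym
     (negbTE b0b1) eqxx.
have [->|s1] := eqVneq s a1.
  have E : mK a1 = inl a1 by apply: mK_gen; [rewrite eq_sym b0a1 | exact: a1b1].
  by left; rewrite E /rK gK_a1 nK_N0 ordS0 rot_a1 /mK eqxx.
have [->|sb0] := eqVneq s b0.
  have E : mK b0 = inr (inl o1) by rewrite /mK eqxx.
  by rewrite E /rK gK_N01; apply: step_mK; [exact: gb0a0|exact: gb0a1].
have [->|sb1] := eqVneq s b1.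
  have E : mK b1 = inr (inr o1) by rewrite /mK eq_sym (negbTE b0b1) eqxx.
  by rewrite E /rK gK_N11; apply: step_mK; [exact: gb1a0|exact: gb1a1].
rewrite mK_gen // /rK gK_gen //; apply: step_mK; by rewrite ?ga0 ?ga1.
Qed.


Hypothesis Hcon : tri_connected T.

Lemma kind_all (Q : pred kind) : Q (inl a0) -> (forall y, Q y -> Q (nK y)) ->
  (forall y, Q y -> Q (gK y)) -> forall y, Q y.
Proof.
move=> Q0 QnK QgK.
have Qn2 y : Q (nK y) -> Q y.
  by move=> H; rewrite -(nK3 y); apply: (QnK _ (QnK _ H)).
have QN0 k : Q (inr (inl k)) -> Q (inr (inl o2)).
  case: (ord3_cases k) => -> // H.
    by rewrite -ordS1 -nK_N0 -ordS0 -nK_N0; exact: (QnK _ (QnK _ H)).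
  by rewrite -ordS1 -nK_N0; apply QnK.
have QN1 k : Q (inr (inr k)) -> Q (inr (inr o2)).
  case: (ord3_cases k) => -> // H.
    by rewrite -ordS1 -nK_N1 -ordS0 -nK_N1; apply QnK; apply QnK.
  by rewrite -ordS1 -nK_N1; apply QnK.
have QN0b k : Q (inr (inl k)) -> Q (inl b0).
  by move/QN0 => H; rewrite -gK_N02; apply QgK.
have QN1b k : Q (inr (inr k)) -> Q (inl b1).
  by move/QN1 => H; rewrite -gK_N12; apply QgK.
have QmK r : Q (mK r) -> Q (inl r).
  rewrite /mK; case: eqP => [->|_]; first exact: QN0b.
  case: eqP => [->|_] //; exact: QN1b.
have QOa0 : Q (inl b0) -> Q (inl a0) by move=> H; apply Qn2.
have QOa1 : Q (inl b1) -> Q (inl a1) by move=> H; apply Qn2.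
have step s s' : Q (inl s) -> (s' == glue s) || (s' == nextc s) -> Q (inl s').
  move=> Hs /orP [] /eqP ->; last by rewrite -nK_O; apply QnK.
  have [E|s0] := eqVneq s a0.
    subst s; apply QOa1; apply: (@QN1b o0); rewrite -gK_a0; apply QgK; exact Hs.
  have [E|s1] := eqVneq s a1.
    subst s; rewrite ga1'; apply QOa0; apply: (@QN0b o0); rewrite -gK_a1; apply QgK; exact Hs.
  have [E|sb0] := eqVneq s b0.
    subst s; apply QmK; rewrite -gK_N01; apply QgK.
    rewrite -ordS0 -nK_N0 -ordS2 -nK_N0 -gK_b0; apply QnK; apply QnK; apply QgK; exact Hs.
  have [E|sb1] := eqVneq s b1.
    subst s; apply QmK; rewrite -gK_N11; apply QgK.
    rewrite -ordS0 -nK_N1 -ordS2 -nK_N1 -gK_b1; apply QnK; apply QnK; apply QgK; exact Hs.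
  by apply QmK; rewrite -gK_gen //; apply QgK.
have Qold s : Q (inl s).
  have /connectP [p Hp ->] := Hcon a0 s.
  elim: p a0 Q0 Hp => [|x p IH] z Qz //= /andP [Hzx Hp].
  by apply: IH Hp; apply: step Qz Hzx.
have H0 : Q (inr (inl o2)) by rewrite -gK_b0; apply QgK; apply Qold.
have H1 : Q (inr (inr o2)) by rewrite -gK_b1; apply QgK; apply Qold.
case=> [s|[k|k]] //.
- case: (ord3_cases k) => -> //.
    by rewrite -ordS2 -nK_N0; apply QnK.
  by rewrite -ordS0 -ordS2 -!nK_N0; apply QnK; apply QnK.
- case: (ord3_cases k) => -> //.
    by rewrite -ordS2 -nK_N1; apply QnK.
  by rewrite -ordS0 -ordS2 -!nK_N1; apply QnK; apply QnK.
Qed.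

End Constr.


Section Enc.
Variable T : triangulation.
Variable t0 : 'I_(nt T).
Hypothesis HT3 : T3 T.
Hypothesis Hcon : tri_connected T.

Local Notation kind := (kind T).
Local Notation N := (nt T).

Definition wid (t : 'I_N) : 'I_N.+2 := widen_ord (leqW (leqnSn _)) t.
Definition N0 : 'I_N.+2 := Ordinal (leqnSn N.+1).
Definition N1 : 'I_N.+2 := ord_max.

Definition enc (y : kind) : 'I_N.+2 * 'I_3 :=
  match y with
  | inl s => (wid s.1, s.2)
  | inr (inl k) => (N0, k)
  | inr (inr k) => (N1, k)
  end.

Definition dec (x : 'I_N.+2 * 'I_3) : kind :=
  match (insub (val x.1) : option 'I_N) with
  | Some t => inl (t, x.2)
  | None => if val x.1 == N then inr (inl x.2) else inr (inr x.2)
  end.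

Lemma encK : cancel enc dec.
Proof.
case=> [[t k]|[k|k]]; rewrite /dec /=.
- by rewrite (insubT (fun m => m < N) (ltn_ord t)) /=; congr (inl (_, _)); apply/val_inj.
- by rewrite insubF ?ltnn // eqxx.
- by rewrite insubF ?ltnn ?ltnSn ?(gtn_eqF (ltnSn N)) // ltnNge leqnSn.
Qed.

Lemma decK : cancel dec enc.
Proof.
case=> [i k]; rewrite /dec /=; case: insubP => [t Ht Et|Hi] /=.
  by congr (_, _); apply/val_inj; rewrite /= Et.
have Hl := ltn_ord i; move: Hi; rewrite -leqNgt => Hi.
case: eqP => [Ei|Ne]; congr (_, _); apply/val_inj => //=.
rewrite /=; lia.
Qed.

Lemma enc_inj : injective enc. Proof. exact: can_inj encK. Qed.

Definition glue' x := enc (gK t0 (dec x)).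

Lemma glue'_invol : involutive glue'.
Proof. by move=> x; rewrite /glue' encK gK_invol // decK. Qed.

Lemma glue'_nofix x : glue' x != x.
Proof.
apply/eqP => /(f_equal dec); rewrite /glue' encK => E.
by move: (gK_nofix t0 HT3 (dec x)); rewrite E eqxx.
Qed.

Definition T' := Triangulation glue'_invol glue'_nofix.

Lemma nextcE y : @nextc T' (enc y) = enc (nK y).
Proof. by case: y => [[t k]|[k|k]]. Qed.

Lemma glueE y : @glue T' (enc y) = enc (gK t0 y).
Proof. by rewrite /= /glue' encK. Qed.

Lemma rotE y : @Defs.rot T' (enc y) = enc (rK t0 y).
Proof. by rewrite /Defs.rot glueE nextcE. Qed.

End Enc.


Section Main.
Variable T : triangulation.
Variable t0 : 'I_(nt T).
Hypothesis HT3 : T3 T.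
Hypothesis Hcon : tri_connected T.

Local Notation TT := (T' t0 HT3).
Local Notation rot' := (@Defs.rot TT).
Local Notation rotT := (@Defs.rot T).
Local Notation enc := (@enc T).
Local Notation dec := (@dec T).

Lemma conn' : tri_connected TT.
Proof.
move=> x y.
set E' := (fun a b : side TT => (b == glue a) || (b == nextc a)).
pose z := enc (inl (a0 t0)).
have H1 : forall w, connect E' z (enc w).
  apply: (kind_all HT3 Hcon (Q := fun w => connect E' z (enc w))) => [|w Hw|w Hw].
  - exact: connect0.
  - by apply: connect_trans Hw (connect1 _); rewrite /E' nextcE eqxx orbT.
  - by apply: connect_trans Hw (connect1 _); rewrite /E' glueE eqxx.
have back w : connect E' (enc w) z -> connect E' (enc (nK (nK w))) z.
  move=> Hw; apply: connect_trans (connect1 _) Hw.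
  by rewrite /E' nextcE nK3 eqxx orbT.
have H2 : forall w, connect E' (enc w) z.
  apply: (kind_all HT3 Hcon (Q := fun w => connect E' (enc w) z)) => [|w Hw|w Hw].
  - exact: connect0.
  - by rewrite -[nK w]nK3 nK3; move: (back _ (back _ Hw)); rewrite nK3.
  - apply: connect_trans (connect1 _) Hw.
    by rewrite /E' glueE gK_invol // eqxx.
rewrite -(decK x) -(decK y); exact: connect_trans (H2 _) (H1 _).
Qed.


Lemma rot'_inj : injective rot'. Proof. exact: trot_inj. Qed.
Lemma rotT_inj : injective rotT. Proof. exact: trot_inj. Qed.

Definition pcyc := map enc (pl t0).
Definition P0 := enc (inl (b0 t0)).

Lemma cyc4 (U : finType) (f : U -> U) a b c d :
  f a = b -> f b = c -> f c = d -> f d = a -> fcycle f [:: a; b; c; d].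
Proof. by move=> Ha Hb Hc Hd; rewrite /= Ha Hb Hc Hd !eqxx. Qed.

Lemma pcyc_cycle : fcycle rot' pcyc.
Proof.
apply: cyc4; rewrite rotE; [exact/congr1/(rK_p1 t0 HT3) | exact/congr1/(rK_p2 t0)
  | exact/congr1/(rK_p3 t0 HT3) | exact/congr1/(rK_p4 t0)].
Qed.

Lemma pcyc_uniq : uniq pcyc.
Proof.
rewrite /pcyc (map_inj_uniq (@enc_inj T)) /pl /= !inE /= !andbT.
by rewrite (_ : (inl (b0 t0) == inl (b1 t0) :> kind T) = (b0 t0 == b1 t0)) // (negbTE (b0b1 t0 HT3)).
Qed.

Lemma mem_pcyc x : (x \in pcyc) = (dec x \in pl t0).
Proof. by rewrite -{1}(decK x) /pcyc mem_map //; exact: enc_inj. Qed.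

Lemma P0_in : P0 \in pcyc. Proof. by rewrite mem_pcyc /P0 encK inE eqxx. Qed.

Lemma deg_p x : dec x \in pl t0 -> @deg TT x = 4.
Proof. by rewrite -mem_pcyc => Hx; rewrite /deg (order_cycle pcyc_cycle pcyc_uniq Hx). Qed.

Definition aa : {pred side TT} := [predC fconnect rot' P0].

Lemma in_aa x : (x \in aa) = (dec x \notin pl t0).
Proof. by rewrite inE /= -[x \in fconnect rot' P0]/(fconnect rot' P0 x) (fconnect_cycle pcyc_cycle P0_in) mem_pcyc. Qed.

Definition hh (s : side T) : side TT := enc (mK t0 s).
Definition hh' (x : side TT) (_ : x \in aa) : side T := hK t0 (dec x).

Lemma hh_aa s : hh s \in aa.
Proof. by rewrite in_aa /hh encK mK_notp. Qed.

Lemma unitC x : x \in aa -> fconnect rot' x (hh (hK t0 (dec x))).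
Proof.
rewrite in_aa => Hx; rewrite -{1}(decK x) /hh.
case: (unitK HT3 Hx) => [->|<-]; first exact: connect0.
by apply: connect1; rewrite /= rotE eqxx.
Qed.

Lemma cl_aa : closed (frel rot') aa.
Proof. apply: predC_closed; apply: connect_closed; exact: (fun x y => fconnect_sym rot'_inj x y). Qed.

Lemma adj : rel_adjunction hh (frel rot') (frel rotT) aa.
Proof.
apply: (intro_adjunction (fun x y => fconnect_sym rotT_inj x y) cl_aa hh').
- move=> x ax; split; first exact: unitC.
  move=> y ay /eqP Ey; rewrite /hh' -Ey -{2}(decK x) rotE encK.
  move: ax; rewrite in_aa => ax.
  case: (rK_hK HT3 ax) => ->; first exact: connect0.
  by apply: connect1; rewrite /= eqxx.
- move=> x' ax; split; first by rewrite /hh' /hh encK hK_mK connect0.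
  move=> y' /eqP <-; rewrite /hh.
  case: (rK_mK t0 HT3 x') => <-.
    by apply: connect1; rewrite /= rotE eqxx.
  have H1 : connect (frel rot') (enc (mK t0 x')) (enc (rK t0 (mK t0 x'))).
    by apply: connect1; rewrite /= rotE eqxx.
  by apply: connect_trans H1 (connect1 _); rewrite /= rotE eqxx.
Qed.

Lemma nverts' : nverts TT = (nverts T).+1.
Proof.
have symT : connect_sym (frel rotT) := fun x y => fconnect_sym rotT_inj x y.
have symT' : connect_sym (frel rot') := fun x y => fconnect_sym rot'_inj x y.
rewrite /nverts (n_compC (fconnect rot' P0)) (n_comp_connect symT') add1n.
congr S.
rewrite (adjunction_n_comp hh symT' symT cl_aa adj).
apply: eq_n_comp_r => s; rewrite !inE; exact: (hh_aa s).
Qed.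

Lemma deg_np x : dec x \notin pl t0 -> deg (hK t0 (dec x)) <= @deg TT x.
Proof.
rewrite -in_aa => ax.
rewrite /deg /order.
apply: leq_trans (leq_imset_card (fun y => hK t0 (dec y)) (fconnect rot' x)).
apply/subset_leq_card/subsetP => s Hs; apply/imsetP; exists (hh s).
  rewrite inE; apply: connect_trans (unitC ax) _.
  by rewrite -(rel_functor adj) ?hh_aa.
by rewrite /hh encK hK_mK.
Qed.

End Main.


Section Fin.
Variable T : triangulation.
Variable t0 : 'I_(nt T).
Hypothesis HT3 : T3 T.
Hypothesis Hcon : tri_connected T.
Local Notation TT := (T' t0 HT3).

Lemma genus' g : tri_genus T g -> tri_genus TT g.
Proof.
rewrite /tri_genus (nverts' t0 HT3) => H.
have E1 := nedges2 T; have E2 := nedges2 TT.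
have : nt TT = (nt T).+2 by [].
lia.
Qed.

Lemma degP (P : nat -> Prop) : (forall m, P m -> P m.+1) -> P 4 ->
  (forall c : side T, P (deg c)) -> forall c : side TT, P (deg c).
Proof.
move=> Pup P4 Hc x.
have [Hx|Hx] := boolP (dec x \in pl t0); first by rewrite (deg_p HT3 Hx).
have := deg_np HT3 Hx; have := Hc (hK t0 (dec x)).
elim: (deg x) => [|m IH] H; first by rewrite leqn0 => /eqP <-.
rewrite leq_eqVlt => /orP [/eqP <- //|]; rewrite ltnS => Hle; apply Pup; exact: IH H Hle.
Qed.

Lemma T3' : T3 TT.
Proof.
move=> c; apply: (degP (P := fun m => 3 <= m)) => //; first exact: leqW.
Qed.

Lemma T4' : T4 T -> T4 TT.
Proof.
move=> H4 c; apply: (degP (P := fun m => 4 <= m)) => //; exact: leqW.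
Qed.

Lemma T3half' : T3half T -> T3half TT.
Proof.
move=> [_ H] ; split; first exact: T3'.
move=> s.
have [Hx|Hx] := boolP (dec s \in pl t0); first by left; rewrite (deg_p HT3 Hx).
have [Hy|Hy] := boolP (dec (nextc s) \in pl t0); first by right; rewrite (deg_p HT3 Hy).
have E : hK t0 (dec (nextc s)) = nextc (hK t0 (dec s)).
  by rewrite -{1}(decK s) nextcE encK hK_nK.
case: (H (hK t0 (dec s))) => H1; [left|right].
  exact: leq_trans H1 (deg_np HT3 Hx).
by apply: leq_trans (deg_np HT3 Hy); rewrite E.
Qed.

End Fin.

Lemma pick_t0 (T : triangulation) : 0 < nverts T -> exists t : 'I_(nt T), True.
Proof.
move=> H.
have : 0 < #|{: side T}|.
  apply: leq_trans H _; rewrite /nverts /n_comp_mem; exact: max_card.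
by case/card_gt0P => x _; exists x.1.
Qed.


Theorem lemma5p2 (g n : nat) : 0 < n ->
  [/\ has_triangulation g n T3 -> has_triangulation g n.+1 T3,
      has_triangulation g n T3half -> has_triangulation g n.+1 T3half &
      has_triangulation g n T4 -> has_triangulation g n.+1 T4].
Proof.
move=> Hn.
have key : forall (P : triangulation -> Prop), (forall U, P U -> T3 U) ->
    (forall U (t0 : 'I_(nt U)) (H3 : T3 U), P U -> P (T' t0 H3)) ->
    has_triangulation g n P -> has_triangulation g n.+1 P.
  move=> P P3 PP [U [Hc Hg Hv HP]].
  have H3 := P3 U HP.
  have [t0 _] := pick_t0 (T := U) (ltac:(by rewrite Hv)).
  exists (T' t0 H3); split.
  - exact: conn'.
  - exact: genus'.
  - by rewrite nverts' Hv.
  - exact: PP.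
split; apply: key.
- by [].
- by move=> U t0 H3 _; exact: T3'.
- by move=> U [].
- by move=> U t0 H3; exact: T3half'.
- by move=> U H c; apply: ltnW (H c).
- by move=> U t0 H3; exact: T4'.
Qed.
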